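(* Let $A\in\{0,1\}^{m\times m}$ and $B\in\{0,1\}^{n\times n}$ be non-degenerate and let $\varphi:X_A\to X_B$ be an elementary conjugacy. Define $R_\varphi\in\{0,1\}^{m\times n}$ and $S_\varphi\in\{0,1\}^{n\times m}$ by $(R_\varphi)_{a,b}=1$ iff there is $a'$ with $\varphi_{\mathrm{loc}}(a,a')=b$, and $(S_\varphi)_{b,a}=1$ iff there is $b'$ with $\varphi^{-1}_{\mathrm{loc}}(b,b')=a$. Then $R_\varphi S_\varphi=A$ and $S_\varphi R_\varphi=B$.
   Context: A matrix is non-degenerate if it has no zero rows or columns; products are integer matrix products. $X_A=\{x\in\{1,\dots,m\}^{\mathbb Z}:A_{x_\ell,x_{\ell+1}}=1\ \forall\ell\}$ with the left shift. A conjugacy is a shift-commuting homeomorphism. A conjugacy $\varphi:X_A\to X_B$ is elementary if there are maps $\varphi_{\mathrm{loc}}$ (on pairs $(a,a')$ with $A_{a,a'}=1$) and $\varphi^{-1}_{\mathrm{loc}}$ (on pairs $(b,b')$ with $B_{b,b'}=1$) such that $\varphi(x)_i=\varphi_{\mathrm{loc}}(x_i,x_{i+1})$ and $\varphi^{-1}(y)_i=\varphi^{-1}_{\mathrm{loc}}(y_{i-1},y_i)$ for all $x,y,i$; the existential quantifiers above range over such allowed pairs. *)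

(* Defs.v *)
From mathcomp Require Import all_boot all_order all_algebra.
Set Implicit Arguments. Unset Strict Implicit. Unset Printing Implicit Defensive.
Import GRing.Theory Num.Theory.
Local Open Scope ring_scope.

Definition config (m : nat) := int -> 'I_m.

Definition zero_one (p q : nat) (A : 'M[int]_(p, q)) : Prop :=
  forall i j, A i j = 0 \/ A i j = 1.

Definition nondeg_mx (m : nat) (A : 'M[int]_m) : Prop :=
  (forall i, exists j, A i j != 0) /\ (forall j, exists i, A i j != 0).

Definition inX (m : nat) (A : 'M[int]_m) (x : config m) : Prop :=
  forall l : int, A (x l) (x (l + 1)) = 1.

Definition shift (m : nat) (x : config m) : config m := fun i => x (i + 1).

(* continuity w.r.t. the product topology (of discrete alphabets) on X_A *)
Definition continuous_on (m n : nat) (A : 'M[int]_m)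
    (f : config m -> config n) : Prop :=
  forall x, inX A x -> forall N : nat, exists M : nat, forall y, inX A y ->
    (forall i : int, (absz i <= M)%N -> y i = x i) ->
    forall i : int, (absz i <= N)%N -> f y i = f x i.

Definition conjugacy (m n : nat) (A : 'M[int]_m) (B : 'M[int]_n)
    (phi : config m -> config n) (psi : config n -> config m) : Prop :=
  (forall x, inX A x -> inX B (phi x)) /\
  (forall y, inX B y -> inX A (psi y)) /\
  (forall x, inX A x -> forall i, psi (phi x) i = x i) /\
  (forall y, inX B y -> forall i, phi (psi y) i = y i) /\
  (forall x, inX A x -> forall i, phi (shift x) i = shift (phi x) i) /\
  continuous_on A phi /\ continuous_on B psi.

Definition elementary_rules (m n : nat) (A : 'M[int]_m) (B : 'M[int]_n)
    (phi : config m -> config n) (psi : config n -> config m)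
    (philoc : 'I_m -> 'I_m -> 'I_n) (psiloc : 'I_n -> 'I_n -> 'I_m) : Prop :=
  (forall x, inX A x -> forall i, phi x i = philoc (x i) (x (i + 1))) /\
  (forall y, inX B y -> forall i, psi y i = psiloc (y (i - 1)) (y i)).

Definition Rmat (m n : nat) (A : 'M[int]_m) (philoc : 'I_m -> 'I_m -> 'I_n)
  : 'M[int]_(m, n) :=
  \matrix_(a < m, b < n)
    (if [exists a' : 'I_m, (A a a' == 1) && (philoc a a' == b)] then 1 else 0).

Definition Smat (m n : nat) (B : 'M[int]_n) (psiloc : 'I_n -> 'I_n -> 'I_m)
  : 'M[int]_(n, m) :=
  \matrix_(b < n, a < m)
    (if [exists b' : 'I_n, (B b b' == 1) && (psiloc b b' == a)] then 1 else 0).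

(* Main.v *)
Require Import Defs.
From mathcomp Require Import all_boot all_order all_algebra zify.
Local Open Scope ring_scope.
Set Implicit Arguments. Unset Strict Implicit. Unset Printing Implicit Defensive.
Import Order.TTheory GRing.Theory Num.Theory.

Definition fwd (m : nat) (A : 'M[int]_m) (i : 'I_m) : 'I_m :=
  odflt i [pick j | A i j == 1].
Definition bwd (m : nat) (A : 'M[int]_m) (j : 'I_m) : 'I_m :=
  odflt j [pick i | A i j == 1].

Lemma fwdP m (A : 'M[int]_m) : zero_one A -> nondeg_mx A -> forall i, A i (fwd A i) = 1.
Proof.
move=> z01 [nr nc] i; rewrite /fwd; case: pickP => [j /eqP //|H].
have [j Hj] := nr i; case: (z01 i j) => Hij; first by rewrite Hij eqxx in Hj.
by have := H j; rewrite Hij eqxx.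
Qed.

Lemma bwdP m (A : 'M[int]_m) : zero_one A -> nondeg_mx A -> forall j, A (bwd A j) j = 1.
Proof.
move=> z01 [nr nc] j; rewrite /bwd; case: pickP => [i /eqP //|H].
have [i Hi] := nc j; case: (z01 i j) => Hij; first by rewrite Hij eqxx in Hi.
by have := H i; rewrite Hij eqxx.
Qed.

Definition pathx m (A : 'M[int]_m) (a a' : 'I_m) (z : int) : 'I_m :=
  match z with
  | Posz 0 => a
  | Posz k.+1 => iter k (fwd A) a'
  | Negz k => iter k.+1 (bwd A) a
  end.

Lemma path0 m (A : 'M[int]_m) : zero_one A -> nondeg_mx A ->
  forall a a', A a a' = 1 -> inX A (pathx A a a').
Proof.
move=> z01 nd a a' Ha [[|k]|[|k]].
- by [].
- have -> : Posz k.+1 + 1 = Posz k.+2 by lia.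
  by rewrite /= fwdP.
- by rewrite /= bwdP.
- have -> : Negz k.+1 + 1 = Negz k by rewrite !NegzE; lia.
  by rewrite /= bwdP.
Qed.

Lemma path_ext m (A : 'M[int]_m) : zero_one A -> nondeg_mx A ->
  forall a a' (k : int), A a a' = 1 -> exists x, inX A x /\ x k = a /\ x (k+1) = a'.
Proof.
move=> z01 nd a a' k Ha; exists (fun i => pathx A a a' (i - k)); split.
  move=> l; have -> : l + 1 - k = (l - k) + 1 by lia.
  exact: path0.
have -> : k + 1 - k = 1 by lia.
by rewrite subrr.
Qed.

Lemma splice m (A : 'M[int]_m) (x z : config m) (k : int) :
  inX A x -> inX A z -> x k = z k ->
  inX A (fun i => if (i <= k)%R then x i else z i).
Proof.
move=> Hx Hz Hk l /=.
case Hlk: (l <= k); case Hl1: (l + 1 <= k).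
- exact: Hx.
- have E : l = k by lia.
  by subst l; rewrite Hk; exact: Hz.
- lia.
- exact: Hz.
Qed.

Section Main.
Lemma dir1 (m n : nat) (A : 'M[int]_m) (B : 'M[int]_n)
  (phi : config m -> config n) (psi : config n -> config m)
  (philoc : 'I_m -> 'I_m -> 'I_n) (psiloc : 'I_n -> 'I_n -> 'I_m) :
  zero_one A -> zero_one B -> nondeg_mx A -> nondeg_mx B ->
  conjugacy A B phi psi ->
  elementary_rules A B phi psi philoc psiloc ->
  Rmat A philoc *m Smat B psiloc = A.
Proof.
move=> zA zB nA nB [phiX [psiX [psiphi [phipsi _]]]] [ephi epsi].
have key1 : forall a c, A a c = 1 ->
   [exists a' : 'I_m, (A a a' == 1) && (philoc a a' == philoc a c)] /\
   [exists b' : 'I_n, (B (philoc a c) b' == 1) && (psiloc (philoc a c) b' == c)].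
  move=> a c Hac; have [x [Hx [x0 x1]]] := path_ext zA nA (0:int) Hac.
  split; first by apply/existsP; exists c; rewrite Hac !eqxx.
  apply/existsP; exists (phi x 1).
  have Hy := phiX x Hx.
  have E0 : phi x 0 = philoc a c by rewrite ephi // x0 x1.
  have := Hy 0; rewrite E0 => ->; rewrite eqxx /=.
  have := epsi _ Hy 1; rewrite subrr E0 psiphi // x1 => <-; done.
have key2 : forall a c b,
   [exists a' : 'I_m, (A a a' == 1) && (philoc a a' == b)] ->
   [exists b' : 'I_n, (B b b' == 1) && (psiloc b b' == c)] ->
   A a c = 1 /\ b = philoc a c.
  move=> a c b /existsP [a' /andP [/eqP Ha /eqP Hb]] /existsP [b' /andP [/eqP Hb' /eqP Hc]].
  have [x [Hx [x0 x1]]] := path_ext zA nA (0:int) Ha.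
  have [z [Hz [z0 z1]]] := path_ext zB nB (0:int) Hb'.
  have Hy := phiX x Hx.
  have y0 : phi x 0 = b by rewrite ephi // x0 x1.
  have Hw := splice Hy Hz (etrans y0 (esym z0)).
  set w := (fun i => _) in Hw.
  have Hu := psiX _ Hw.
  have w0 : w 0 = b by rewrite /w /=.
  have w1 : w 1 = b' by rewrite /w /=.
  have u1 : psi w 1 = c by rewrite epsi // subrr w0 w1.
  have u0 : psi w 0 = a.
    rewrite epsi // w0 /w /=.
    by rewrite -y0 -(epsi _ Hy) psiphi.
  have := Hu 0; rewrite add0r u0 u1 => HA; split => //.
  have := phipsi _ Hw 0; rewrite ephi // add0r u0 u1 w0 => ->; done.
apply/matrixP => a c; rewrite !mxE.
case: (zA a c) => Hac.
  rewrite Hac big1 // => b _; rewrite !mxE.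
  case: ifP => H1; case: ifP => H2; rewrite ?mulr0 ?mul0r //.
  by have [] := key2 _ _ _ H1 H2; rewrite Hac.
rewrite Hac (bigD1 (philoc a c)) //= big1 ?addr0.
  rewrite !mxE; have [-> ->] := key1 _ _ Hac; by [].
move=> b Hb; rewrite !mxE.
case: ifP => H1; case: ifP => H2; rewrite ?mulr0 ?mul0r //.
by have [_ E] := key2 _ _ _ H1 H2; rewrite E eqxx in Hb.
Qed.

Lemma dir2 (m n : nat) (A : 'M[int]_m) (B : 'M[int]_n)
  (phi : config m -> config n) (psi : config n -> config m)
  (philoc : 'I_m -> 'I_m -> 'I_n) (psiloc : 'I_n -> 'I_n -> 'I_m) :
  zero_one A -> zero_one B -> nondeg_mx A -> nondeg_mx B ->
  conjugacy A B phi psi ->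
  elementary_rules A B phi psi philoc psiloc ->
  Smat B psiloc *m Rmat A philoc = B.
Proof.
move=> zA zB nA nB [phiX [psiX [psiphi [phipsi _]]]] [ephi epsi].
have key1 : forall b d, B b d = 1 ->
   [exists b' : 'I_n, (B b b' == 1) && (psiloc b b' == psiloc b d)] /\
   [exists a' : 'I_m, (A (psiloc b d) a' == 1) && (philoc (psiloc b d) a' == d)].
  move=> b d Hbd; have [y [Hy [y0 y1]]] := path_ext zB nB (0:int) Hbd.
  split; first by apply/existsP; exists d; rewrite Hbd !eqxx.
  apply/existsP; exists (psi y 2).
  have Hx := psiX y Hy.
  have E1 : psi y 1 = psiloc b d by rewrite epsi // subrr y0 y1.
  have := Hx 1; rewrite E1 => ->; rewrite eqxx /=.
  have := ephi _ Hx 1; rewrite E1 phipsi // y1 => <-; done.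
have key2 : forall b d a,
   [exists b' : 'I_n, (B b b' == 1) && (psiloc b b' == a)] ->
   [exists a' : 'I_m, (A a a' == 1) && (philoc a a' == d)] ->
   B b d = 1 /\ a = psiloc b d.
  move=> b d a /existsP [b' /andP [/eqP Hb /eqP Ha]] /existsP [a' /andP [/eqP Ha' /eqP Hd]].
  have [y [Hy [y0 y1]]] := path_ext zB nB (0:int) Hb.
  have [z [Hz [z1 z2]]] := path_ext zA nA (1:int) Ha'.
  have Hx := psiX y Hy.
  have x1 : psi y 1 = a by rewrite epsi // subrr y0 y1.
  have Hw := splice Hx Hz (etrans x1 (esym z1)).
  set w := (fun i => _) in Hw.
  have Hv := phiX _ Hw.
  have w1 : w 1 = a by rewrite /w /=.
  have w2 : w 2 = a' by rewrite /w /=.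
  have v1 : phi w 1 = d by rewrite ephi // w1 w2.
  have v0 : phi w 0 = b.
    rewrite ephi // add0r w1 /w /=.
    by rewrite -x1 -(ephi _ Hx) phipsi.
  have := Hv 0; rewrite add0r v0 v1 => HB; split => //.
  have := psiphi _ Hw 1; rewrite epsi // subrr v0 v1 w1 => ->; done.
apply/matrixP => b d; rewrite !mxE.
case: (zB b d) => Hbd.
  rewrite Hbd big1 // => a _; rewrite !mxE.
  case: ifP => H1; case: ifP => H2; rewrite ?mulr0 ?mul0r //.
  by have [] := key2 _ _ _ H1 H2; rewrite Hbd.
rewrite Hbd (bigD1 (psiloc b d)) //= big1 ?addr0.
  rewrite !mxE; have [-> ->] := key1 _ _ Hbd; by [].
move=> a Ha; rewrite !mxE.
case: ifP => H1; case: ifP => H2; rewrite ?mulr0 ?mul0r //.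
by have [_ E] := key2 _ _ _ H1 H2; rewrite E eqxx in Ha.
Qed.
End Main.

Theorem mainTheorem9 (m n : nat) (A : 'M[int]_m) (B : 'M[int]_n)
  (phi : config m -> config n) (psi : config n -> config m)
  (philoc : 'I_m -> 'I_m -> 'I_n) (psiloc : 'I_n -> 'I_n -> 'I_m) :
  zero_one A -> zero_one B -> nondeg_mx A -> nondeg_mx B ->
  conjugacy A B phi psi ->
  elementary_rules A B phi psi philoc psiloc ->
  Rmat A philoc *m Smat B psiloc = A /\ Smat B psiloc *m Rmat A philoc = B.
Proof.
move=> h1 h2 h3 h4 h5 h6; split; [exact: (dir1 h1 h2 h3 h4 h5 h6) | exact: (dir2 h1 h2 h3 h4 h5 h6)].
Qed.
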